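(* Let $q \ge 2$ and $n$ be integers, let $k \le \lfloor n/2\rfloor - 1$ be a nonnegative integer, and set $u = \lfloor n/2\rfloor + 1$ and $v = n-k$. If $u < v$ and $$\frac{\binom{n-k-1}{n-v}}{\binom{n-k-1}{n-u}} > \frac{(q^{2v-n}-1)\binom{n}{v}}{(q^{2u-n}-1)\binom{n}{u}},$$ then $k$-uniform states in $(\mathbb{C}^q)^{\otimes n}$ do not exist.
   Context: A pure state $|\psi\rangle \in (\mathbb{C}^q)^{\otimes n}$ is called $k$-uniform if, with $\rho = |\psi\rangle\langle\psi|$, for every subset $S \subseteq \{1,\dots,n\}$ with $|S| = k$ the reduced state of $\rho$ on the parties in $S$ equals $I/q^k$, where $I$ is the identity on $(\mathbb{C}^q)^{\otimes k}$. *)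

(* Defs.v *)
(* Complex numbers: complex R = R[i] for a real closed field R
   (this covers the usual complex numbers, R = the reals). *)
From HB Require Import structures.
From mathcomp Require Import all_boot all_order all_algebra.
From mathcomp Require Import complex.
Set Implicit Arguments. Unset Strict Implicit. Unset Printing Implicit Defensive.
Import Order.TTheory GRing.Theory Num.Theory.
Local Open Scope ring_scope.

(* A vector |psi> in (C^q)^{\otimes n}, given by its amplitudes in the
   computational basis |x_1 ... x_n>, x : 'I_n -> 'I_q. *)
Definition config (n q : nat) := {ffun 'I_n -> 'I_q}.
Definition qvec (R : rcfType) (n q : nat) := config n q -> R[i].

Definition glue n q (S : {set 'I_n}) (a z : config n q) : config n q :=
  [ffun i => if i \in S then a i else z i].

(* Matrix entry <a_S| Tr_{S^c} |psi><psi| |b_S> of the reduced state of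
   rho = |psi><psi| on the parties in S; only the values of a, b on S matter.
   The sum over the complement runs over configurations z restricted by
   z = a on S (so each assignment of the complement is counted once). *)
Definition reduced_entry (R : rcfType) n q (psi : qvec R n q) (S : {set 'I_n})
  (a b : config n q) : R[i] :=
  \sum_(z : config n q | [forall i in S, z i == a i])
     psi (glue S a z) * (psi (glue S b z))^*.

Definition reduced_maximally_mixed (R : rcfType) n q (psi : qvec R n q)
  (S : {set 'I_n}) : Prop :=
  forall a b : config n q,
    reduced_entry psi S a b =
      (if [forall i in S, a i == b i] then (q%:R ^+ #|S|)^-1 else 0).

Definition is_pure_state (R : rcfType) n q (psi : qvec R n q) : Prop :=
  \sum_(x : config n q) psi x * (psi x)^* = 1.

Definition k_uniform (R : rcfType) n q (k : nat) (psi : qvec R n q) : Prop :=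
  is_pure_state psi /\
  forall S : {set 'I_n}, #|S| = k -> reduced_maximally_mixed psi S.

(* Main.v *)
Require Import Defs.
From HB Require Import structures.
From mathcomp Require Import all_boot all_order all_algebra.
From mathcomp Require Import complex.
From mathcomp Require Import ring lra zify.
Set Implicit Arguments. Unset Strict Implicit. Unset Printing Implicit Defensive.
Import Order.TTheory GRing.Theory Num.Theory.
Local Open Scope ring_scope.

Definition tog (I : finType) (i : I) (T : {set I}) : {set I} :=
  if i \in T then T :\ i else i |: T.

Lemma togK (I : finType) (i : I) : involutive (tog i).
Proof.
move=> T; rewrite /tog; case: (boolP (i \in T)) => iT.
  by rewrite in_setD1 eqxx /= setD1K.
by rewrite in_setU1 eqxx /= setU1K.
Qed.

Lemma tog_sign (R : numDomainType) (I : finType) (i : I) (T : {set I}) (x : R) :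
  (-1) ^+ #|tog i T| * x = - ((-1) ^+ #|T| * x).
Proof.
rewrite /tog; case: ifP => iT.
  by rewrite [in RHS](cardsD1 i T) iT exprD expr1 mulN1r mulNr opprK.
by rewrite cardsU1 iT /= exprD expr1 mulN1r mulNr.
Qed.

Lemma toggle_sum (R : numDomainType) (I : finType) (P : pred {set I})
   (f : {set I} -> R) (i : I) :
  (forall T, P (tog i T) = P T) -> (forall T, P T -> f (tog i T) = f T) ->
  \sum_(T | P T) (-1) ^+ #|T| * f T = 0.
Proof.
move=> HP Hf.
set S := \sum_(T | P T) _.
have HS : S = - S.
  rewrite {1}/S (reindex_inj (inv_inj (togK i))) /= /S -sumrN.
  apply: eq_big => T; first by rewrite HP.
  by move=> PT; rewrite tog_sign Hf // -HP.
have : S *+ 2 == 0 by rewrite mulr2n {1}HS addNr.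
by rewrite mulrn_eq0 /= => /eqP.
Qed.

Lemma bin_step (N a b : nat) : (a <= b)%N ->
  ('C(N.+1, a) * 'C(N, b) <= 'C(N.+1, b) * 'C(N, a))%N.
Proof.
move=> ab.
rewrite -(@leq_pmul2l N.+1) //.
have E j : (N.+1 * 'C(N, j) = (N.+1 - j) * 'C(N.+1, j))%N.
  by rewrite -mul_bin_down.
have -> : (N.+1 * ('C(N.+1, a) * 'C(N, b)) = (N.+1 - b) * ('C(N.+1, a) * 'C(N.+1, b)))%N.
  by rewrite mulnCA E; ring.
have -> : (N.+1 * ('C(N.+1, b) * 'C(N, a)) = (N.+1 - a) * ('C(N.+1, a) * 'C(N.+1, b)))%N.
  by rewrite mulnCA E; ring.
by apply: leq_mul => //; apply: leq_sub2l.
Qed.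

Lemma bin_ratio (M N a b : nat) : (a <= b)%N -> (N <= M)%N ->
  ('C(M, a) * 'C(N, b) <= 'C(M, b) * 'C(N, a))%N.
Proof.
move=> ab /subnK <-; elim: (M - N)%N => [|d IH]; first by rewrite add0n mulnC.
rewrite addSn.
have [Hb|Hb] := leqP b (d + N).
- have St := bin_step (d + N) ab.
  have pos : (0 < 'C(d + N, b))%N by rewrite bin_gt0.
  case: (posnP 'C(N, b)) => [->|Nb]; first by rewrite muln0.
  have posa : (0 < 'C(d + N, a))%N by rewrite bin_gt0 (leq_trans ab).
  rewrite -(@leq_pmul2r ('C(d + N, a) * 'C(d+N, b))) ?muln_gt0 ?posa //.
  have H1 := leq_mul St IH.
  move: H1.
  set A1 := 'C((d + N).+1, a); set B1 := 'C((d + N).+1, b).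
  set Ad := 'C(d + N, a); set Bd := 'C(d + N, b).
  set An := 'C(N, a); set Bn := 'C(N, b).
  have -> : (A1 * Bn * (Ad * Bd) = A1 * Bd * (Ad * Bn))%N by ring.
  by have -> : (B1 * An * (Ad * Bd) = B1 * Ad * (Bd * An))%N by ring.
- have : 'C(N, b) = 0%N by rewrite bin_small // (leq_ltn_trans (leq_addl d N)).
  by move=> ->; rewrite muln0.
Qed.

Lemma tog_sub_l (I : finType) (i : I) (S T : {set I}) :
  i \in S -> (tog i T \subset S) = (T \subset S).
Proof.
move=> iS; rewrite /tog; case: ifP => iT; apply/subsetP/subsetP => H x xin.
- by case: (eqVneq x i) => [->//|xi]; apply: H; rewrite in_setD1 xi.
- by apply: H; move: xin; rewrite in_setD1 => /andP[].
- by apply: H; rewrite in_setU1 xin orbT.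
- by move: xin; rewrite in_setU1 => /orP[/eqP->//|]; apply: H.
Qed.

Lemma tog_sub_r (I : finType) (i : I) (W T : {set I}) :
  i \notin W -> (W \subset tog i T) = (W \subset T).
Proof.
move=> iW; rewrite /tog; case: ifP => iT; apply/subsetP/subsetP => H x xin.
- by move: (H x xin); rewrite in_setD1 => /andP[].
- rewrite in_setD1 (H x xin) andbT; apply: contraNneq iW => <-; done.
- move: (H x xin); rewrite in_setU1 => /orP[/eqP xi|//].
  by move: iW; rewrite -xi xin.
- by rewrite in_setU1 (H x xin) orbT.
Qed.

Lemma tog_capl (I : finType) (i : I) (W T : {set I}) :
  i \notin W -> W :&: tog i T = W :&: T.
Proof.
move=> iW; apply/setP => x; rewrite !inE /tog.
case: (eqVneq x i) => [->|xi]; first by rewrite (negbTE iW).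
by case: ifP; rewrite ?in_setD1 ?in_setU1 (negbTE xi).
Qed.

Lemma sign_sq (R : numDomainType) (n : nat) : (-1) ^+ n * (-1) ^+ n = 1 :> R.
Proof. by rewrite -exprMn mulN1r opprK expr1n. Qed.

Lemma mobius_inv (R : numDomainType) (I : finType) (g : {set I} -> R) (S : {set I}) :
  \sum_(T : {set I} | T \subset S) ((-1) ^+ #|T| * \sum_(W : {set I} | W \subset T) (-1) ^+ #|W| * g W)
  = g S.
Proof.
under eq_bigr do rewrite mulr_sumr.
rewrite (exchange_big_dep (fun W : {set I} => W \subset S)) /=; last first.
  by move=> T W TS WT; apply: subset_trans WT TS.
rewrite (bigD1 S) //= [X in _ + X]big1 ?addr0.
  rewrite (big_pred1 S); first by rewrite mulrA sign_sq mul1r.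
  by move=> T /=; rewrite eqEsubset.
move=> W /andP[WS WnS].
have [i iS iW] : exists2 i, i \in S & i \notin W.
  apply/subsetPn; apply: contra WnS => SW; by rewrite eqEsubset WS SW.
under eq_bigr do rewrite mulrA (mulrC _ ((-1) ^+ #|W|)) -mulrA.
rewrite -mulr_sumr.
rewrite (toggle_sum (f := fun _ => g W) (i := i)) ?mulr0 //.
by move=> T; rewrite tog_sub_l // tog_sub_r.
Qed.

Lemma double_sign (R : numDomainType) (I : finType) (f : {set I} -> R) (T : {set I}) :
  \sum_(W : {set I} | W \subset T) \sum_(W' : {set I} | W' \subset T)
     ((-1) ^+ #|W| * (-1) ^+ #|W'| * f (W :&: W'))
  = (-1) ^+ #|T| * \sum_(W : {set I} | W \subset T) (-1) ^+ #|W| * f W.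
Proof.
rewrite (bigD1 T) //= [X in _ + X]big1 ?addr0.
  rewrite mulr_sumr; apply: eq_bigr => W WT.
  by rewrite -mulrA; congr (_ * (_ * f _)); apply/setIidPr.
move=> W /andP[WT WnT].
have [i iT iW] : exists2 i, i \in T & i \notin W.
  apply/subsetPn; apply: contra WnT => TW; by rewrite eqEsubset WT TW.
under eq_bigr do rewrite (mulrC ((-1) ^+ #|W|)) -mulrA.
rewrite (toggle_sum (f := fun W' => (-1) ^+ #|W| * f (W :&: W')) (i := i)) //.
  by move=> W'; rewrite tog_sub_l.
by move=> W' _; rewrite tog_capl.
Qed.

Definition agree n q (U : {set 'I_n}) (x y : config n q) : bool :=
  [forall i in U, x i == y i].

Lemma agreeP n q (U : {set 'I_n}) (x y : config n q) :
  reflect (forall i, i \in U -> x i = y i) (agree U x y).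
Proof.
apply: (iffP forall_inP) => H i iU; first by apply/eqP; apply: H.
by apply/eqP; apply: H.
Qed.

Lemma glueE n q (S : {set 'I_n}) (a z : config n q) i :
  glue S a z i = if i \in S then a i else z i.
Proof. by rewrite /glue ffunE. Qed.

Lemma card_cfg n q : #|{: config n q}| = (q ^ n)%N.
Proof. by rewrite card_ffun !card_ord. Qed.

Lemma card_agree n q (A : {set 'I_n}) (z : config n q) :
  #|[pred d : config n q | agree A d z]| = (q ^ #|~: A|)%N.
Proof.
pose F := fun i : 'I_n => if i \in A then pred1 (z i) else predT.
have -> : #|[pred d : config n q | agree A d z]| = #|family F|.
  apply: eq_card => d; rewrite !inE; apply/agreeP/familyP => H i.
    by rewrite /F; case: ifP => iA //; rewrite inE H.
  by move=> iA; move: (H i); rewrite /F iA inE => /eqP.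
rewrite card_family foldrE big_image /=.
rewrite (eq_bigr (fun i => if i \in A then 1%N else q)); last first.
  move=> i _; rewrite /F; case: ifP => _; rewrite ?card1 //; by rewrite -[q in RHS]card_ord; apply: eq_card.
rewrite -(prod_nat_const (mem (~: A))) [in RHS]big_mkcond /=.
by apply: eq_bigr => i _; rewrite inE; case: (i \in A).
Qed.

Definition sw n q (U : {set 'I_n}) (p : config n q * config n q) :=
  (glue U p.2 p.1, glue U p.1 p.2).

Lemma swK n q (U : {set 'I_n}) : involutive (@sw n q U).
Proof.
case=> c d; rewrite /sw /=; congr (_, _); apply/ffunP => i;
  by rewrite !glueE; case: (i \in U).
Qed.

Lemma sum_glue_pair n q (U : {set 'I_n}) (V : zmodType) (G : config n q -> V) :
  \sum_(c : config n q) \sum_(d : config n q) G (glue U d c) = (\sum_e G e) *+ (q ^ n).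
Proof.
rewrite pair_big /= (reindex_inj (inv_inj (swK U))) /=.
have E p : glue U (sw U p).2 (sw U p).1 = p.1.
  by apply/ffunP => i; rewrite /sw /= !glueE; case: (i \in U).
under eq_bigr do rewrite E.
rewrite -(pair_big predT predT (fun c (d : config n q) => G c)) /=.
rewrite -sumrMnl; apply: eq_bigr => c _.
by rewrite sumr_const card_cfg.
Qed.

Definition vec (R : rcfType) n q := config n q -> config n q -> R[i].
Definition Qn (R : rcfType) n q : R[i] := (q%:R) ^+ n.

Definition Pop (R : rcfType) n q (U : {set 'I_n}) (X : vec R n q) : vec R n q :=
  fun x y => (Qn R n q)^-1 *
    \sum_(c : config n q) (agree U x y)%:R * X (glue U c x) (glue U c y).

Definition ip (R : rcfType) n q (X Y : vec R n q) : R[i] :=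
  \sum_(x : config n q) \sum_(y : config n q) (X x y)^* * Y x y.

Lemma agreeU n q (U W : {set 'I_n}) (x y : config n q) :
  agree (U :|: W) x y = agree U x y && agree W x y.
Proof.
apply/agreeP/andP => [H|[/agreeP H1 /agreeP H2] i].
  by split; apply/agreeP => i iU; apply: H; rewrite inE iU ?orbT.
by rewrite inE => /orP[]; [apply: H1|apply: H2].
Qed.

Lemma agree_glue n q (U W : {set 'I_n}) (c x y : config n q) :
  agree U x y -> agree W (glue U c x) (glue U c y) = agree W x y.
Proof.
move=> /agreeP hU; apply/agreeP/agreeP => H i iW; move: (H i iW);
  rewrite !glueE; case: ifP => // iU _; exact: hU.
Qed.

Lemma glue_glue n q (U W : {set 'I_n}) (c d x : config n q) :
  glue W d (glue U c x) = glue (U :|: W) (glue W d c) x.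
Proof.
apply/ffunP => i; rewrite !glueE inE.
by case: (i \in W); case: (i \in U).
Qed.

Lemma Qn_neq0 (R : rcfType) n q : (0 < q)%N -> Qn R n q != 0.
Proof. by move=> q0; rewrite /Qn expf_neq0 // pnatr_eq0 -lt0n. Qed.

Lemma P_comp (R : rcfType) n q (U W : {set 'I_n}) (X : vec R n q) x y :
  (0 < q)%N -> Pop U (Pop W X) x y = Pop (U :|: W) X x y.
Proof.
move=> q0; rewrite /Pop agreeU.
case: (boolP (agree U x y)) => hU /=; last first.
  by rewrite !big1 ?mulr0 // => c _; rewrite /= mulr0n mul0r.
under eq_bigr => c _ do rewrite mul1r (agree_glue W c hU).
case: (boolP (agree W x y)) => hW /=; last first.
  rewrite !big1 ?mulr0 // => c _; first exact: mul0r.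
  by rewrite big1 ?mulr0 // => d _; exact: mul0r.
under eq_bigr => c _ do under eq_bigr => d _ do rewrite mulr1n mul1r !glue_glue.
under [in RHS]eq_bigr => c _ do rewrite mulr1n mul1r.
rewrite -mulr_sumr (sum_glue_pair W
  (fun e => X (glue (U :|: W) e x) (glue (U :|: W) e y))).
rewrite -mulr_natl natrX -/(Qn R n q) mulKf ?Qn_neq0 //.
Qed.

Lemma sum3 (V : zmodType) (T : finType) (f : T -> T -> T -> V) :
  \sum_x \sum_y \sum_c f x y c = \sum_(t : T * (T * T)) f t.1 t.2.1 t.2.2.
Proof.
rewrite -(pair_big predT predT (fun x (p : T * T) => f x p.1 p.2)) /=.
by apply: eq_bigr => x _; rewrite -(pair_big predT predT (fun y c => f x y c)).
Qed.

Definition phi3 n q (U : {set 'I_n}) (t : config n q * (config n q * config n q)) :=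
  if agree U t.1 t.2.1 then (glue U t.2.2 t.1, (glue U t.2.2 t.2.1, glue U t.1 t.2.2))
  else t.

Lemma agree_refl n q (U : {set 'I_n}) (c x y : config n q) :
  agree U (glue U c x) (glue U c y).
Proof. by apply/agreeP => i iU; rewrite !glueE iU. Qed.

Lemma phi3K n q (U : {set 'I_n}) : involutive (@phi3 n q U).
Proof.
case=> x [y c]; rewrite /phi3 /=.
case: (boolP (agree U x y)) => h /=; last by rewrite (negbTE h).
rewrite agree_refl /=; congr (_, (_, _)); apply/ffunP => i; rewrite !glueE;
  case: (boolP (i \in U)) => iU //.
by rewrite (agreeP _ _ _ h i iU).
Qed.

Lemma conj_ind (R : rcfType) (b : bool) : ((b%:R : R[i])^* = b%:R).
Proof. by rewrite rmorph_nat. Qed.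

Lemma conj_Qn (R : rcfType) n q : (Qn R n q)^-1^* = (Qn R n q)^-1.
Proof. by rewrite /Qn fmorphV rmorphXn rmorph_nat. Qed.

Lemma P_adj (R : rcfType) n q (U : {set 'I_n}) (X Y : vec R n q) :
  ip (Pop U X) Y = ip X (Pop U Y).
Proof.
rewrite /ip /Pop.
have -> : \sum_x \sum_y ((Qn R n q)^-1 * \sum_c (agree U x y)%:R *
      X (glue U c x) (glue U c y))^* * Y x y =
   (Qn R n q)^-1 * \sum_x \sum_y \sum_(c : config n q)
     ((agree U x y)%:R * (X (glue U c x) (glue U c y))^* * Y x y).
  rewrite mulr_sumr; apply: eq_bigr => x _; rewrite mulr_sumr; apply: eq_bigr => y _.
  rewrite rmorphM /Qn fmorphV rmorphXn rmorph_nat rmorph_sum -mulrA mulr_suml.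
  by congr (_ * _); apply: eq_bigr => c _; rewrite rmorphM rmorph_nat.
have -> : \sum_x \sum_y (X x y)^* * ((Qn R n q)^-1 * \sum_c (agree U x y)%:R *
      Y (glue U c x) (glue U c y)) =
   (Qn R n q)^-1 * \sum_x \sum_y \sum_(c : config n q)
     ((agree U x y)%:R * (X x y)^* * Y (glue U c x) (glue U c y)).
  rewrite mulr_sumr; apply: eq_bigr => x _; rewrite mulr_sumr; apply: eq_bigr => y _.
  rewrite mulrCA mulr_sumr; congr (_ * _); apply: eq_bigr => c _.
  by rewrite mulrCA mulrA.
congr (_ * _); rewrite !sum3.
have hinj := inv_inj (@phi3K n q U).
rewrite [LHS](reindex_inj hinj).
apply: eq_bigr => -[x [y c]] _; rewrite /phi3 /=.
case: (boolP (agree U x y)) => h /=; last by rewrite (negbTE h) /= !mul0r.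
rewrite agree_refl /=.
have E1 : glue U (glue U x c) (glue U c x) = x.
  by apply/ffunP => i; rewrite !glueE; case: (i \in U).
have E2 : glue U (glue U x c) (glue U c y) = y.
  apply/ffunP => i; rewrite !glueE; case: (boolP (i \in U)) => iU //.
  by rewrite (agreeP _ _ _ h i iU).
by rewrite E1 E2.
Qed.

Lemma agreeC n q (A : {set 'I_n}) (x y : config n q) : agree A x y = agree A y x.
Proof. by apply/agreeP/agreeP => H i iA; rewrite H. Qed.

Lemma sum_agree (R : rcfType) n q (A : {set 'I_n}) (x : config n q) (K : R[i]) :
  \sum_(W : config n q) (agree A x W)%:R * K = (q ^ #|~: A|)%:R * K.
Proof.
rewrite -mulr_suml; congr (_ * _); rewrite -natr_sum; congr (_%:R).
rewrite -(card_agree A x) -sum1_card [RHS]big_mkcond /=.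
by apply: eq_bigr => W _; rewrite inE agreeC; case: (agree A W x).
Qed.

Definition rho (R : rcfType) n q (psi : qvec R n q) : vec R n q :=
  fun x y => psi x * (psi y)^*.

Definition hU (R : rcfType) n q (psi : qvec R n q) (U : {set 'I_n}) : R[i] :=
  ip (rho psi) (Pop U (rho psi)).

Definition Zs (R : rcfType) n q (psi : qvec R n q) (S : {set 'I_n}) : R[i] :=
  \sum_(x : config n q) \sum_(y : config n q)
     (psi x)^* * (psi y)^* * psi (glue S x y) * psi (glue S y x).

Definition gs (R : rcfType) n q (psi : qvec R n q) (S : {set 'I_n}) : R[i] :=
  (q%:R) ^+ #|S| * Zs psi S.

Lemma glueC n q (S : {set 'I_n}) (x y : config n q) : glue (~: S) x y = glue S y x.
Proof. by apply/ffunP => i; rewrite !glueE inE; case: (i \in S). Qed.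

Lemma Zs_sym (R : rcfType) n q (psi : qvec R n q) S : Zs psi (~: S) = Zs psi S.
Proof.
rewrite /Zs; apply: eq_bigr => x _; apply: eq_bigr => y _.
by rewrite !glueC mulrAC.
Qed.

Lemma agree_glue2 n q (U : {set 'I_n}) (x W Y : config n q) :
  agree U x (glue U W Y) = agree U x W.
Proof.
by apply/agreeP/agreeP => H i iU; move: (H i iU); rewrite glueE iU.
Qed.

Lemma conjM2 (R : rcfType) (a b : R[i]) : (a * b^*)^* = a^* * b.
Proof. rewrite rmorphM; congr (_ * _); exact: conjCK. Qed.

Lemma h_Z (R : rcfType) n q (psi : qvec R n q) (S : {set 'I_n}) :
  (0 < q)%N -> Qn R n q * hU psi (~: S) = gs psi S.
Proof.
move=> q0; set U := ~: S.
rewrite /hU /ip /Pop mulr_sumr.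
have -> : gs psi S = \sum_x \sum_Y (q ^ #|~: U|)%:R *
    ((psi x)^* * psi (glue U x Y) * psi (glue U Y x) * (psi Y)^*).
  rewrite /gs /Zs /U setCK natrX mulr_sumr; apply: eq_bigr => x _.
  rewrite mulr_sumr; apply: eq_bigr => Y _; congr (_ * _).
  by rewrite !glueC mulrAC -!mulrA; congr (_ * _); rewrite mulrC -mulrA.
apply: eq_bigr => x _.
rewrite mulr_sumr.
transitivity (\sum_y \sum_(c : config n q) (agree U x y)%:R * (rho psi x y)^* *
   rho psi (glue U c x) (glue U c y)).
  apply: eq_bigr => y _; rewrite mulrCA mulVKf ?Qn_neq0 // mulr_sumr.
  by apply: eq_bigr => c _; rewrite mulrCA mulrA.
rewrite pair_big /= (reindex_inj (inv_inj (swK U))) /=.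
under [RHS]eq_bigr => Y _ do rewrite -(sum_agree U x).
rewrite [RHS]pair_big /=; apply: eq_bigr => -[Y W] _ /=.
rewrite /sw /= agree_glue2.
case: (boolP (agree U x W)) => h; last by rewrite !mul0r.
rewrite !mul1r.
have E1 : glue U W Y = glue U x Y.
  by apply/ffunP => i; rewrite !glueE; case: (boolP (i \in U)) => iU //; rewrite (agreeP _ _ _ h i iU).
have E2 : glue U (glue U Y W) x = glue U Y x.
  by apply/ffunP => i; rewrite !glueE; case: (i \in U).
have E3 : glue U (glue U Y W) (glue U W Y) = Y.
  by apply/ffunP => i; rewrite !glueE; case: (i \in U).
rewrite E3 E2 E1 /rho conjM2.
by rewrite mulrA.
Qed.

Definition as_ (R : rcfType) n q (psi : qvec R n q) (T : {set 'I_n}) : R[i] :=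
  (-1) ^+ #|T| * \sum_(W : {set 'I_n} | W \subset T) (-1) ^+ #|W| * gs psi W.

Definition Fv (R : rcfType) n q (psi : qvec R n q) (T : {set 'I_n}) : vec R n q :=
  fun x y => \sum_(W : {set 'I_n} | W \subset T) (-1) ^+ #|W| * Pop (~: W) (rho psi) x y.

Lemma ip_ext (R : rcfType) n q (X Y Y' : vec R n q) :
  (forall x y, Y x y = Y' x y) -> ip X Y = ip X Y'.
Proof.
by move=> H; apply: eq_bigr => x _; apply: eq_bigr => y _; rewrite H.
Qed.

Lemma ip_ge0 (R : rcfType) n q (X : vec R n q) : 0 <= ip X X.
Proof.
apply: sumr_ge0 => x _; apply: sumr_ge0 => y _.
by rewrite mulrC; exact: mul_conjC_ge0.
Qed.

Lemma conj_sign (R : rcfType) (m : nat) : ((-1) ^+ m : R[i])^* = (-1) ^+ m.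
Proof. by rewrite rmorphXn rmorphN1. Qed.

Lemma ip_F (R : rcfType) n q (psi : qvec R n q) (T : {set 'I_n}) :
  ip (Fv psi T) (Fv psi T) =
  \sum_(W : {set 'I_n} | W \subset T) \sum_(W' : {set 'I_n} | W' \subset T)
    ((-1) ^+ #|W| * (-1) ^+ #|W'| *
      ip (Pop (~: W) (rho psi)) (Pop (~: W') (rho psi))).
Proof.
rewrite /ip /Fv.
transitivity (\sum_x \sum_y \sum_(W : {set 'I_n} | W \subset T)
   \sum_(W' : {set 'I_n} | W' \subset T)
    ((-1) ^+ #|W| * (-1) ^+ #|W'| *
      ((Pop (~: W) (rho psi) x y)^* * Pop (~: W') (rho psi) x y))).
  apply: eq_bigr => x _; apply: eq_bigr => y _.
  rewrite rmorph_sum mulr_suml; apply: eq_bigr => W _.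
  rewrite mulr_sumr; apply: eq_bigr => W' _.
  rewrite rmorphM rmorphXn rmorphN1.
  by rewrite mulrACA.
under eq_bigr => x _ do rewrite exchange_big.
rewrite [LHS]exchange_big; apply: eq_bigr => W _.
under eq_bigr => x _ do rewrite exchange_big.
rewrite [LHS]exchange_big; apply: eq_bigr => W' _.
rewrite mulr_sumr; apply: eq_bigr => x _.
by rewrite mulr_sumr.
Qed.

Lemma ip_PP (R : rcfType) n q (psi : qvec R n q) (A B : {set 'I_n}) :
  (0 < q)%N -> ip (Pop A (rho psi)) (Pop B (rho psi)) = hU psi (A :|: B).
Proof.
move=> q0; rewrite P_adj /hU; apply: ip_ext => x y; exact: P_comp.
Qed.

Lemma as_ip (R : rcfType) n q (psi : qvec R n q) (T : {set 'I_n}) :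
  (0 < q)%N -> as_ psi T = Qn R n q * ip (Fv psi T) (Fv psi T).
Proof.
move=> q0; rewrite ip_F.
under eq_bigr => W _ do under eq_bigr => W' _ do rewrite ip_PP // -setCI.
rewrite (double_sign (fun W => hU psi (~: W))) mulrCA mulr_sumr /as_.
congr (_ * _); apply: eq_bigr => W _.
by rewrite [RHS]mulrCA h_Z.
Qed.

Lemma as_ge0 (R : rcfType) n q (psi : qvec R n q) (T : {set 'I_n}) :
  (0 < q)%N -> 0 <= as_ psi T.
Proof.
move=> q0; rewrite as_ip //; apply: mulr_ge0; last exact: ip_ge0.
by rewrite /Qn exprn_ge0 // ler0n.
Qed.

Lemma gs_sum (R : rcfType) n q (psi : qvec R n q) (S : {set 'I_n}) :
  gs psi S = \sum_(T : {set 'I_n} | T \subset S) as_ psi T.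
Proof. by rewrite /as_ mobius_inv. Qed.

Lemma sum_ind_eq (R : rcfType) (T : finType) (a : T) (F : T -> R[i]) :
  \sum_z (z == a)%:R * F z = F a.
Proof.
rewrite (bigD1 a) //= eqxx mul1r big1 ?addr0 // => z /negbTE ->.
by rewrite mul0r.
Qed.

Lemma agree_uniq n q (S : {set 'I_n}) (x d z : config n q) :
  agree S z x && agree (~: S) z d = (z == glue S x d).
Proof.
apply/andP/eqP => [[/agreeP h1 /agreeP h2]|->].
  apply/ffunP => i; rewrite glueE; case: (boolP (i \in S)) => iS; first exact: h1.
  by apply: h2; rewrite inE.
split; apply/agreeP => i; rewrite ?inE glueE => iS; first by rewrite iS.
by rewrite (negbTE iS).
Qed.

Lemma sum_fiber (R : rcfType) n q (S : {set 'I_n}) (x : config n q)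
   (K : config n q -> R[i]) :
  (forall z d, agree (~: S) z d -> K z = K d) ->
  \sum_(c : config n q) K c =
  (q ^ #|S|)%:R * \sum_(z : config n q | agree S z x) K z.
Proof.
move=> HK.
have -> : #|S| = #|~: ~: S| by rewrite setCK.
rewrite mulr_sumr.
under [RHS]eq_bigr => z _ do rewrite -(sum_agree (~: S) z).
rewrite exchange_big /=; apply: eq_bigr => d _.
rewrite -[LHS](sum_ind_eq (glue S x d) (fun _ => K d)) [RHS]big_mkcond /=.
apply: eq_bigr => z _.
rewrite -agree_uniq; case: (boolP (agree S z x)) => h1 /=; last by rewrite mul0r.
case: (boolP (agree (~: S) z d)) => h2 /=; last by rewrite !mul0r.
by rewrite !mul1r (HK z d h2).
Qed.

Lemma glue_agreeC n q (S : {set 'I_n}) (x z d : config n q) :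
  agree (~: S) z d -> glue S x z = glue S x d.
Proof.
move=> /agreeP h; apply/ffunP => i; rewrite !glueE; case: (boolP (i \in S)) => iS //.
by apply: h; rewrite inE.
Qed.

Lemma Pop_re (R : rcfType) n q (psi : qvec R n q) (S : {set 'I_n}) x y :
  Pop (~: S) (rho psi) x y = (Qn R n q)^-1 * (agree (~: S) x y)%:R *
     ((q ^ #|S|)%:R * reduced_entry psi S x y).
Proof.
rewrite /Pop -mulrA -mulr_sumr; congr (_ * (_ * _)).
rewrite /rho; under eq_bigr do rewrite !glueC.
rewrite (@sum_fiber R n q S x (fun c => psi (glue S x c) * (psi (glue S y c))^*)).
  by [].
by move=> z d h /=; rewrite (glue_agreeC x h) (glue_agreeC y h).
Qed.

Lemma agree_eq n q (S : {set 'I_n}) (x y : config n q) :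
  agree S x y && agree (~: S) x y = (x == y).
Proof.
apply/andP/eqP => [[/agreeP h1 /agreeP h2]|->]; last first.
  by split; apply/agreeP.
apply/ffunP => i; case: (boolP (i \in S)) => iS; first exact: h1.
by apply: h2; rewrite inE.
Qed.

Lemma gs_k (R : rcfType) n q (k : nat) (psi : qvec R n q) (S : {set 'I_n}) :
  (0 < q)%N -> k_uniform k psi -> #|S| = k -> gs psi S = 1.
Proof.
move=> q0 [pure ku] Sk.
have HP x y : Pop (~: S) (rho psi) x y = (Qn R n q)^-1 * (x == y)%:R.
  rewrite Pop_re (ku S Sk x y) -(agree_eq S); rewrite -/(agree S x y).
  case: (boolP (agree S x y)) => h /=.
    by rewrite natrX mulfV ?mulr1 // expf_neq0 // pnatr_eq0 -lt0n.
  by rewrite !mulr0.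
rewrite -h_Z // /hU /ip.
have -> : \sum_x \sum_y (rho psi x y)^* * Pop (~: S) (rho psi) x y =
    \sum_x (rho psi x x)^* * (Qn R n q)^-1.
  apply: eq_bigr => x _; under eq_bigr do rewrite HP mulrA mulrC eq_sym.
  by rewrite (sum_ind_eq x (fun y => (rho psi x y)^* * (Qn R n q)^-1)).
rewrite -mulr_suml -rmorph_sum.
have -> : \sum_x rho psi x x = 1 by [].
by rewrite rmorph1 mul1r mulfV // Qn_neq0.
Qed.

Lemma gs_0 (R : rcfType) n q (psi : qvec R n q) :
  is_pure_state psi -> gs psi set0 = 1.
Proof.
move=> pure; rewrite /gs cards0 expr0 mul1r /Zs.
have E (x y : config n q) : glue set0 x y = y by apply/ffunP => i; rewrite glueE inE.
transitivity ((\sum_x psi x * (psi x)^*) * (\sum_y psi y * (psi y)^*)).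
  rewrite mulr_suml; apply: eq_bigr => x _; rewrite mulr_sumr; apply: eq_bigr => y _.
  by rewrite !E; ring.
by rewrite pure mul1r.
Qed.

Lemma cnt_card n (T : {set 'I_n}) m : (m <= n)%N ->
  #|[set S : {set 'I_n} | (#|S| == m) && (T \subset S)]| = 'C(n - #|T|, n - m).
Proof.
move=> mn.
rewrite -(card_imset _ (@setC_inj _)) (can_imset_pre _ (@setCK _)).
have -> : (n - #|T|)%N = #|~: T|.
  by have := cardsC T; rewrite card_ord; lia.
rewrite -cards_draws; apply: eq_card => S; rewrite !inE subsetC andbC.
congr (_ && _).
have := cardsC S; rewrite card_ord => cS.
by apply/eqP/eqP; lia.
Qed.

Lemma sum_const_sets (R : rcfType) n m (c : R[i]) : (m <= n)%N ->
  \sum_(S : {set 'I_n} | #|S| == m) c = c * ('C(n, n - m))%:R.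
Proof.
move=> mn.
transitivity (\sum_(S in [set S : {set 'I_n} | (#|S| == m) && (set0 \subset S)]) c).
  by apply: eq_bigl => S; rewrite inE sub0set andbT.
by rewrite sumr_const cnt_card // cards0 subn0 mulr_natr.
Qed.

Lemma sum_gs_m (R : rcfType) n q (psi : qvec R n q) m : (m <= n)%N ->
  \sum_(S : {set 'I_n} | #|S| == m) gs psi S =
  \sum_(T : {set 'I_n}) as_ psi T * ('C(n - #|T|, n - m))%:R.
Proof.
move=> mn.
under eq_bigr do rewrite gs_sum.
rewrite (exchange_big_dep predT) //=; apply: eq_bigr => T _.
transitivity (\sum_(S in [set S : {set 'I_n} | (#|S| == m) && (T \subset S)]) as_ psi T).
  by apply: eq_bigl => S; rewrite inE.
by rewrite sumr_const cnt_card // mulr_natr.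
Qed.

Lemma split0 (R : rcfType) n (a c : {set 'I_n} -> R[i]) :
  \sum_(T : {set 'I_n}) a T * c T = a set0 * c set0 + \sum_(T | T != set0) a T * c T.
Proof. by rewrite (bigD1 set0). Qed.

Theorem theorem5 (R : rcfType) (q n k : nat) :
  (2 <= q)%N ->
  (k + 1 <= n./2)%N ->
  let u := (n./2 + 1)%N in
  let v := (n - k)%N in
  (u < v)%N ->
  ('C(n - k - 1, n - v)%:R / 'C(n - k - 1, n - u)%:R : R) >
    ((q%:R ^+ (2 * v - n) - 1) * 'C(n, v)%:R) /
    ((q%:R ^+ (2 * u - n) - 1) * 'C(n, u)%:R) ->
  ~ exists psi : qvec R n q, k_uniform k psi.
Proof.
move=> q2 hk u v huv hyp [psi Hku].
have q0 : (0 < q)%N by apply: leq_trans q2.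
have Hpure : is_pure_state psi by case: Hku.
have Hh := odd_double_half n.
have hh : (n./2 + n./2 <= n <= n./2 + n./2 + 1)%N.
  by move: Hh; rewrite -addnn; case: (odd n) => /= Hh'; lia.
have un : (u <= n)%N by rewrite /u; lia.
have vn : (v <= n)%N by rewrite /v; lia.
have nv : (n - v = k)%N by rewrite /v; lia.
set Q : R[i] := q%:R.
set a := as_ psi.
set g := gs psi.
have Ha0 : a set0 = 1.
  rewrite /a /as_ cards0 expr0 mul1r (big_pred1 set0); last by move=> W; rewrite subset0.
  by rewrite cards0 expr0 mul1r gs_0.
have Hge T : 0 <= a T by apply: as_ge0.
have Hsym S : Q ^+ #|~: S| * g S = Q ^+ #|S| * g (~: S).
  by rewrite /g /gs Zs_sym mulrCA.
have Hsum m : (m <= n)%N -> \sum_(S : {set 'I_n} | #|S| == m) g S =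
   a set0 * ('C(n, n - m))%:R +
   \sum_(T | T != set0) a T * ('C(n - #|T|, n - m))%:R.
  by move=> mn; rewrite sum_gs_m // split0 cards0 subn0.
have HaT T : T != set0 -> (#|T| <= k)%N -> a T = 0.
  have kn : (k <= n)%N by lia.
  have E := Hsum k kn.
  rewrite (eq_bigr (fun _ => 1)) in E; last by move=> S /eqP Sk; apply: (gs_k q0 Hku).
  rewrite sum_const_sets // mul1r Ha0 mul1r in E.
  have E2 : \sum_(T | T != set0) a T * ('C(n - #|T|, n - k))%:R = 0.
    by apply: (addrI ('C(n, n - k))%:R); rewrite addr0.
  move=> Tn0 Tk.
  have /eqP := psumr_eq0P (fun T _ => mulr_ge0 (Hge T) (ler0n _ _)) E2 Tn0.
  rewrite mulf_eq0 pnatr_eq0 -[_ == 0%N]negbK -lt0n bin_gt0.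
  have -> : (n - k <= n - #|T|)%N by lia.
  by rewrite orbF => /eqP.
have Qpos : 0 < Q by rewrite /Q ltr0n; lia.
have Qnz m : Q ^+ m != 0 by rewrite expf_neq0 // lt0r_neq0.
have Hv : \sum_(T | T != set0) a T * ('C(n - #|T|, n - v))%:R =
    ('C(n, n - v))%:R * (Q ^+ (2 * v - n) - 1).
  have E := Hsum v vn.
  rewrite (eq_bigr (fun _ => Q ^+ (2 * v - n))) in E; last first.
    move=> S /eqP Sv.
    have Sc : #|~: S| = k by have := cardsC S; rewrite card_ord; lia.
    have := Hsym S; rewrite Sc /g (gs_k q0 Hku Sc) mulr1 Sv.
    have -> : Q ^+ v = Q ^+ k * Q ^+ (2 * v - n) by rewrite -exprD; congr (_ ^+ _); lia.
    exact: mulfI.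
  rewrite sum_const_sets // Ha0 mul1r in E.
  apply: (addrI ('C(n, n - v))%:R); rewrite -E; ring.
have Hu : ('C(n, n - u))%:R * (Q ^+ (2 * u - n) - 1) <=
    \sum_(T | T != set0) a T * ('C(n - #|T|, n - u))%:R.
  have E := Hsum u un.
  have : \sum_(S : {set 'I_n} | #|S| == u) Q ^+ (2 * u - n) <=
         \sum_(S : {set 'I_n} | #|S| == u) g S.
    apply: ler_sum => S /eqP Su.
    have Sc : #|~: S| = (n - u)%N by have := cardsC S; rewrite card_ord; lia.
    have g1 : 1 <= g (~: S).
      rewrite /g gs_sum (bigD1 set0) ?sub0set //= -/a Ha0 -[X in X <= _]addr0 lerD //.
      by apply: sumr_ge0 => T _; apply: Hge.
    have := Hsym S; rewrite Sc Su => H.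
    rewrite -(ler_pM2l (exprn_gt0 (n - u) Qpos)) H.
    have -> : Q ^+ (n - u) * Q ^+ (2 * u - n) = Q ^+ u by rewrite -exprD; congr (_ ^+ _); lia.
    by rewrite ler_pMr // exprn_gt0.
  rewrite sum_const_sets // E Ha0 mul1r.
  by rewrite mulrBr mulr1 lerBlDl mulrC.
set Rd : R[i] := ('C(n - k - 1, n - u))%:R.
set Rn : R[i] := ('C(n - k - 1, n - v))%:R.
have Hchain : Rn * (('C(n, n - u))%:R * (Q ^+ (2 * u - n) - 1)) <=
              Rd * (('C(n, n - v))%:R * (Q ^+ (2 * v - n) - 1)).
  rewrite -Hv; apply: le_trans (ler_wpM2l (ler0n _ _) Hu) _.
  rewrite !mulr_sumr; apply: ler_sum => T Tn0.
  have [Tk|Tk] := leqP #|T| k; first by rewrite (HaT T Tn0 Tk) !mul0r !mulr0.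
  rewrite mulrCA [Rd * _]mulrCA; apply: ler_wpM2l; first exact: Hge.
  rewrite /Rn /Rd -!natrM ler_nat.
  apply: bin_ratio; first by lia.
  by have := max_card T; rewrite card_ord; lia.
move: Hchain; rewrite (bin_sub un) (bin_sub vn) => Hchain.
have HR : ('C(n - k - 1, n - v)%:R : R) * ((q%:R ^+ (2 * u - n) - 1) * 'C(n, u)%:R) <=
          ('C(n - k - 1, n - u)%:R : R) * ((q%:R ^+ (2 * v - n) - 1) * 'C(n, v)%:R).
  rewrite -lecR !rmorphM !rmorphB !rmorphXn !rmorph_nat rmorph1.
  by rewrite [_ * 'C(n, u)%:R]mulrC [_ * 'C(n, v)%:R]mulrC.
have qR : (1 : R) < q%:R by rewrite ltr1n.
have rBpos : (0 : R) < (q%:R ^+ (2 * u - n) - 1) * 'C(n, u)%:R.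
  apply: mulr_gt0; first by rewrite subr_gt0 exprn_egt1 //; apply/eqP; lia.
  by rewrite ltr0n bin_gt0.
have rdpos : (0 : R) < 'C(n - k - 1, n - u)%:R.
  by rewrite ltr0n bin_gt0; lia.
move: hyp; rewrite ltr_pdivlMr // mulrAC ltr_pdivrMr // => hyp.
have := lt_le_trans hyp HR.
by rewrite mulrC ltxx.
Qed.
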